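(* Let $L_0\in\mathbb{R}^{n\times n}$ have reduced SVD $L_0=U\Sigma V^*$, let $S_0\in\mathbb{R}^{n\times n}$ with support $\Omega$, and let $0<\lambda<1$. Assume $\|\mathcal{P}_\Omega\mathcal{P}_T\|\le 1/2$. Then $(L_0,S_0)$ is the unique solution of \[ \text{minimize } \|L\|_*+\lambda\|S\|_1\quad\text{subject to}\quad L+S=L_0+S_0 \] if there is a triple $(W,F,D)$ of $n\times n$ matrices obeying \[ UV^*+W=\lambda(\mathrm{sgn}(S_0)+F+\mathcal{P}_\Omega D) \] with $\mathcal{P}_TW=0$, $\|W\|\le\frac12$, $\mathcal{P}_\Omega F=0$, $\|F\|_\infty\le\frac12$, and $\|\mathcal{P}_\Omega D\|_F\le\frac14$.
   Context: $U,V\in\mathbb{R}^{n\times r}$ have orthonormal columns. $T=\{UX^*+YV^*: X,Y\in\mathbb{R}^{n\times r}\}$ and $\mathcal{P}_T$ is the orthogonal projection onto $T$ with respect to the trace inner product. $\mathcal{P}_\Omega X$ keeps the entries of $X$ in $\Omega$ and zeroes the others. For linear maps on matrices, $\|\cdot\|$ is the operator norm with respect to the Frobenius norm; for matrices, $\|W\|$ is the spectral norm, $\|\cdot\|_F$ the Frobenius norm, $\|F\|_\infty=\max_{ij}|F_{ij}|$, $\|\cdot\|_*$ the nuclear norm and $\|S\|_1=\sum_{ij}|S_{ij}|$. $\mathrm{sgn}$ is the entrywise sign with $\mathrm{sgn}(0)=0$. *)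

(* Defs.v *)
From mathcomp Require Import all_boot all_order all_algebra.
From mathcomp Require Import boolp classical_sets reals.
Set Implicit Arguments. Unset Strict Implicit. Unset Printing Implicit Defensive.
Import Order.TTheory GRing.Theory Num.Theory.
Local Open Scope ring_scope.
Local Open Scope classical_set_scope.

Section Defs.
Variable R : realType.
Variable n : nat.

Definition trinner (A B : 'M[R]_n) : R := \tr (A^T *m B).

Definition frob (A : 'M[R]_n) : R := Num.sqrt (\sum_i \sum_j A i j ^+ 2).

Definition infnorm (A : 'M[R]_n) : R := \big[Num.max/0]_i \big[Num.max/0]_j `|A i j|.

Definition l1norm (A : 'M[R]_n) : R := \sum_i \sum_j `|A i j|.

Definition vnorm (x : 'cV[R]_n) : R := Num.sqrt (\sum_i x i 0 ^+ 2).

Definition specnorm (W : 'M[R]_n) : R :=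
  sup [set vnorm (W *m x) | x in [set x : 'cV[R]_n | vnorm x <= 1]].

Definition singular_values (L : 'M[R]_n) (s : 'rV[R]_n) : Prop :=
  exists P Q : 'M[R]_n, P^T *m P = 1%:M /\ Q^T *m Q = 1%:M /\
    (forall i, 0 <= s 0 i) /\ L = P *m diag_mx s *m Q^T.

(* nuclear norm: sum of the singular values (the set below is a singleton) *)
Definition nucnorm (L : 'M[R]_n) : R :=
  sup [set \sum_i s 0 i | s in [set s | singular_values L s]].

Definition opnorm (f : 'M[R]_n -> 'M[R]_n) : R :=
  sup [set frob (f X) | X in [set X : 'M[R]_n | frob X <= 1]].

Definition inT (r : nat) (U V : 'M[R]_(n, r)) (Z : 'M[R]_n) : Prop :=
  exists X Y : 'M[R]_(n, r), Z = U *m X^T + Y *m V^T.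

Definition PT (r : nat) (U V : 'M[R]_(n, r)) (X : 'M[R]_n) : 'M[R]_n :=
  xget 0 [set Y | inT U V Y /\ forall Z, inT U V Z -> trinner Z (X - Y) = 0].

Definition supp (S : 'M[R]_n) : {set 'I_n * 'I_n} :=
  [set ij | S ij.1 ij.2 != 0].

Definition PO (Om : {set 'I_n * 'I_n}) (X : 'M[R]_n) : 'M[R]_n :=
  \matrix_(i, j) (if (i, j) \in Om then X i j else 0).

Definition sgnm (S : 'M[R]_n) : 'M[R]_n := \matrix_(i, j) Num.sg (S i j).

End Defs.

(* Main.v *)
Require Import Defs.
From mathcomp Require Import all_boot all_order all_algebra.
From mathcomp Require Import boolp classical_sets reals.
From mathcomp Require Import complex.
From mathcomp Require Import ring lra.
Set Implicit Arguments. Unset Strict Implicit. Unset Printing Implicit Defensive.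
Import Order.TTheory GRing.Theory Num.Theory.
Local Open Scope ring_scope.

Section CS.
Variable R : realType.

Lemma sumsq_ge0 (I : finType) (a : I -> R) : 0 <= \sum_i a i ^+ 2.
Proof. by apply: sumr_ge0 => i _; rewrite sqr_ge0. Qed.

Lemma sumsq_eq0 (I : finType) (a : I -> R) :
  \sum_i a i ^+ 2 = 0 -> forall i, a i = 0.
Proof.
move=> /eqP; rewrite psumr_eq0 => [/allP H i|i _]; last by rewrite sqr_ge0.
by apply/eqP; rewrite -sqrf_eq0; apply: (implyP (H i _)); rewrite ?mem_index_enum.
Qed.

Lemma CS2 (I : finType) (a b : I -> R) :
  (\sum_i a i * b i) ^+ 2 <= (\sum_i a i ^+ 2) * (\sum_i b i ^+ 2).
Proof.
set A := \sum_i a i ^+ 2; set B := \sum_i b i ^+ 2; set C := \sum_i a i * b i.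
have A0 : 0 <= A by exact: sumsq_ge0.
have [Az|Ap] := eqVneq A 0.
  have a0 := sumsq_eq0 Az.
  have -> : C = 0 by rewrite /C big1 // => i _; rewrite a0 mul0r.
  by rewrite expr0n /= Az mul0r.
have Apos : 0 < A by rewrite lt_neqAle eq_sym Ap A0.
have H : 0 <= \sum_i (C * a i - A * b i) ^+ 2 by exact: sumsq_ge0.
have E : \sum_i (C * a i - A * b i) ^+ 2 = A * (A * B - C ^+ 2).
  transitivity (\sum_i (C ^+ 2 * a i ^+ 2 - (2 * C * A) * (a i * b i) + A ^+ 2 * b i ^+ 2)).
    by apply: eq_bigr => i _; ring.
  rewrite big_split /= sumrB -!mulr_sumr -/A -/B -/C; ring.
rewrite E in H; rewrite -subr_ge0.
by rewrite pmulr_rge0 // in H.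
Qed.

Lemma CS (I : finType) (a b : I -> R) :
  \sum_i a i * b i <= Num.sqrt (\sum_i a i ^+ 2) * Num.sqrt (\sum_i b i ^+ 2).
Proof.
rewrite -sqrtrM ?sumsq_ge0 //.
apply: le_trans (ler_norm _) _.
rewrite -sqrtr_sqr ler_sqrt; first by rewrite CS2.
by rewrite mulr_ge0 ?sumsq_ge0.
Qed.

Lemma CSabs (I : finType) (a b : I -> R) :
  `|\sum_i a i * b i| <= Num.sqrt (\sum_i a i ^+ 2) * Num.sqrt (\sum_i b i ^+ 2).
Proof.
rewrite -sqrtrM ?sumsq_ge0 // -sqrtr_sqr ler_sqrt; first by rewrite CS2.
by rewrite mulr_ge0 ?sumsq_ge0.
Qed.

Lemma sqrt_tri (I : finType) (a b : I -> R) :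
  Num.sqrt (\sum_i (a i + b i) ^+ 2) <=
  Num.sqrt (\sum_i a i ^+ 2) + Num.sqrt (\sum_i b i ^+ 2).
Proof.
have hA := sumsq_ge0 a; have hB := sumsq_ge0 b.
rewrite -(ler_pXn2r (n:=2)) //; last 2 first.
- by rewrite nnegrE sqrtr_ge0.
- by rewrite nnegrE addr_ge0 ?sqrtr_ge0.
rewrite sqr_sqrtr ?sumsq_ge0 //.
have -> : \sum_i (a i + b i) ^+ 2 =
   \sum_i a i ^+ 2 + 2 * \sum_i a i * b i + \sum_i b i ^+ 2.
  rewrite mulr_sumr -!big_split /=; apply: eq_bigr => i _; ring.
have := CS a b.
set sa := Num.sqrt _; set sb := Num.sqrt _ => h.
have ea : sa ^+ 2 = \sum_i a i ^+ 2 by rewrite sqr_sqrtr.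
have eb : sb ^+ 2 = \sum_i b i ^+ 2 by rewrite sqr_sqrtr.
rewrite -ea -eb; nra.
Qed.

Lemma sqrt_le_l1 (I : finType) (a : I -> R) :
  Num.sqrt (\sum_i a i ^+ 2) <= \sum_i `|a i|.
Proof.
have h1 : 0 <= \sum_i `|a i| by apply: sumr_ge0.
rewrite -(ler_pXn2r (n:=2)) ?nnegrE ?sqrtr_ge0 // sqr_sqrtr ?sumsq_ge0 //.
rewrite expr2 mulr_suml; apply: ler_sum => i _.
rewrite -[a i ^+ 2]ger0_norm ?sqr_ge0 // normrX expr2 ler_wpM2l //.
rewrite (bigD1 i) //= lerDl; apply: sumr_ge0 => j _; exact: normr_ge0.
Qed.

End CS.

Section Basic.
Variable R : realType.

Definition dotv m (x y : 'cV[R]_m) : R := (x^T *m y) 0 0.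

Lemma dotvE m (x y : 'cV[R]_m) : dotv x y = \sum_i x i 0 * y i 0.
Proof. by rewrite /dotv mxE; apply: eq_bigr => i _; rewrite mxE. Qed.

Lemma vnormE m (x : 'cV[R]_m) : vnorm x = Num.sqrt (dotv x x).
Proof. by rewrite /vnorm dotvE; congr Num.sqrt; apply: eq_bigr => i _; rewrite expr2. Qed.

Lemma dotv_ge0 m (x : 'cV[R]_m) : 0 <= dotv x x.
Proof. by rewrite dotvE; apply: sumr_ge0 => i _; rewrite -expr2 sqr_ge0. Qed.

Lemma vnorm_ge0 m (x : 'cV[R]_m) : 0 <= vnorm x.
Proof. by rewrite vnormE sqrtr_ge0. Qed.

Lemma vnorm_sq m (x : 'cV[R]_m) : vnorm x ^+ 2 = dotv x x.
Proof. by rewrite vnormE sqr_sqrtr // dotv_ge0. Qed.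

Lemma CSv m (x y : 'cV[R]_m) : dotv x y <= vnorm x * vnorm y.
Proof.
rewrite dotvE /vnorm; exact: (CS (fun i => x i 0) (fun i => y i 0)).
Qed.

Lemma dotv_col m p k (A : 'M[R]_(m, p)) (B : 'M[R]_(m, k)) i j :
  dotv (col i A) (col j B) = (A^T *m B) i j.
Proof. by rewrite dotvE mxE; apply: eq_bigr => l _; rewrite !mxE. Qed.

Lemma vnorm_col_unit m k (A : 'M[R]_(m, k)) i :
  A^T *m A = 1%:M -> vnorm (col i A) = 1.
Proof. by move=> h; rewrite vnormE dotv_col h mxE eqxx mulr1n sqrtr1. Qed.

Lemma dotv_mul m k (P : 'M[R]_(m, k)) y z :
  dotv (P *m y) (P *m z) = dotv y (P^T *m P *m z).
Proof. by rewrite /dotv trmx_mul !mulmxA. Qed.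

Lemma vnorm_iso m k (P : 'M[R]_(m, k)) y :
  P^T *m P = 1%:M -> vnorm (P *m y) = vnorm y.
Proof. by move=> h; rewrite !vnormE dotv_mul h mul1mx. Qed.

Lemma dotvC m (x y : 'cV[R]_m) : dotv x y = dotv y x.
Proof. by rewrite !dotvE; apply: eq_bigr => i _; rewrite mulrC. Qed.

Lemma vnormZ m (x : 'cV[R]_m) a : vnorm (a *: x) = `|a| * vnorm x.
Proof.
rewrite !vnormE.
have -> : dotv (a *: x) (a *: x) = (a * a) * dotv x x.
  rewrite !dotvE mulr_sumr; apply: eq_bigr => i _; rewrite !mxE; ring.
by rewrite -expr2 sqrtrM ?sqr_ge0 // sqrtr_sqr.
Qed.

Variable n : nat.
Implicit Types A B C Z : 'M[R]_n.

Lemma trinnerE A B : trinner A B = \sum_i \sum_j A i j * B i j.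
Proof.
rewrite /trinner /mxtrace exchange_big; apply: eq_bigr => i _.
by rewrite mxE; apply: eq_bigr => j _; rewrite mxE.
Qed.

Lemma trinnerP A B : trinner A B = \sum_(p : 'I_n * 'I_n) A p.1 p.2 * B p.1 p.2.
Proof. by rewrite trinnerE pair_bigA. Qed.

Lemma frobP A : frob A = Num.sqrt (\sum_(p : 'I_n * 'I_n) A p.1 p.2 ^+ 2).
Proof. by rewrite /frob pair_bigA. Qed.

Lemma l1P A : l1norm A = \sum_(p : 'I_n * 'I_n) `|A p.1 p.2|.
Proof. by rewrite /l1norm pair_bigA. Qed.

Lemma frob_ge0 A : 0 <= frob A.
Proof. by rewrite /frob sqrtr_ge0. Qed.

Lemma frob_sq A : frob A ^+ 2 = trinner A A.
Proof.
rewrite frobP trinnerP sqr_sqrtr ?sumsq_ge0 //.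
Qed.

Lemma trinner_ge0 A : 0 <= trinner A A.
Proof. by rewrite -frob_sq sqr_ge0. Qed.

Lemma CSF A B : trinner A B <= frob A * frob B.
Proof. by rewrite trinnerP !frobP; exact: CS. Qed.

Lemma CSFabs A B : `|trinner A B| <= frob A * frob B.
Proof. by rewrite trinnerP !frobP; exact: CSabs. Qed.

Lemma frob_tri A B : frob (A + B) <= frob A + frob B.
Proof.
rewrite !frobP.
rewrite (eq_bigr (fun p => (A p.1 p.2 + B p.1 p.2) ^+ 2)); last by move=> p _; rewrite mxE.
exact: (sqrt_tri (fun p : 'I_n * 'I_n => A p.1 p.2) (fun p => B p.1 p.2)).
Qed.

Lemma frob_le_l1 A : frob A <= l1norm A.
Proof. by rewrite frobP l1P; exact: (sqrt_le_l1 (fun p : 'I_n * 'I_n => A p.1 p.2)). Qed.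

Lemma frob_eq0 A : frob A = 0 -> A = 0.
Proof.
move=> h; have : \sum_(p : 'I_n * 'I_n) A p.1 p.2 ^+ 2 = 0.
  have hs : \sum_(p : 'I_n * 'I_n) A p.1 p.2 ^+ 2 <= 0 by rewrite -sqrtr_eq0 -frobP h.
  by apply: le_anti; rewrite hs sumsq_ge0.
move/sumsq_eq0 => H.
by apply/matrixP => i j; rewrite mxE (H (i, j)).
Qed.

Lemma l1_eq0 A : l1norm A = 0 -> A = 0.
Proof.
rewrite l1P => /eqP; rewrite psumr_eq0 // => /allP H.
apply/matrixP => i j; rewrite mxE; apply/eqP; rewrite -normr_eq0.
by apply: (implyP (H (i, j) _)); rewrite ?mem_index_enum.
Qed.

Lemma trinnerC A B : trinner A B = trinner B A.
Proof. by rewrite /trinner -mxtrace_tr trmx_mul trmxK. Qed.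

Lemma trinnerDr A B C : trinner A (B + C) = trinner A B + trinner A C.
Proof. by rewrite /trinner mulmxDr mxtraceD. Qed.

Lemma trinnerDl A B C : trinner (B + C) A = trinner B A + trinner C A.
Proof. by rewrite trinnerC trinnerDr !(trinnerC A). Qed.

Lemma trinnerNr A B : trinner A (- B) = - trinner A B.
Proof. by rewrite /trinner mulmxN raddfN. Qed.

Lemma trinnerNl A B : trinner (- A) B = - trinner A B.
Proof. by rewrite trinnerC trinnerNr trinnerC. Qed.

Lemma trinnerBr A B C : trinner A (B - C) = trinner A B - trinner A C.
Proof. by rewrite trinnerDr trinnerNr. Qed.

Lemma trinnerBl A B C : trinner (B - C) A = trinner B A - trinner C A.
Proof. by rewrite trinnerDl trinnerNl. Qed.

Lemma trinnerZr A B a : trinner A (a *: B) = a * trinner A B.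
Proof. by rewrite /trinner -scalemxAr mxtraceZ. Qed.

Lemma trinnerZl A B a : trinner (a *: A) B = a * trinner A B.
Proof. by rewrite trinnerC trinnerZr trinnerC. Qed.

Lemma tr_mul_diag k (M : 'M[R]_k) (g : 'rV[R]_k) :
  \tr (M *m diag_mx g) = \sum_i M i i * g 0 i.
Proof. by rewrite mul_mx_diag /mxtrace; apply: eq_bigr => i _; rewrite mxE. Qed.

Lemma DB k (P Q : 'M[R]_(n, k)) (g : 'rV[R]_k) Z c :
  P^T *m P = 1%:M -> Q^T *m Q = 1%:M -> (forall i, 0 <= g 0 i) -> 0 <= c ->
  (forall x, vnorm (Z *m x) <= c * vnorm x) ->
  trinner Z (P *m diag_mx g *m Q^T) <= c * \sum_i g 0 i.
Proof.
move=> hP hQ hg hc hZ.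
have -> : trinner Z (P *m diag_mx g *m Q^T) = \tr ((Q^T *m Z^T *m P) *m diag_mx g).
  by rewrite /trinner !mulmxA mxtrace_mulC !mulmxA.
rewrite tr_mul_diag mulr_sumr; apply: ler_sum => i _.
rewrite [_ * g 0 i]mulrC [c * _]mulrC ler_wpM2l //.
have -> : (Q^T *m Z^T *m P) i i = dotv (col i (Z *m Q)) (col i P).
  by rewrite dotv_col trmx_mul.
apply: le_trans (CSv _ _) _.
rewrite (vnorm_col_unit _ hP) mulr1.
have -> : col i (Z *m Q) = Z *m col i Q by rewrite !colE mulmxA.
by apply: le_trans (hZ _) _; rewrite (vnorm_col_unit _ hQ) mulr1.
Qed.

Lemma TRsum k (P Q : 'M[R]_(n, k)) (g : 'rV[R]_k) :
  P^T *m P = 1%:M -> Q^T *m Q = 1%:M ->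
  trinner (P *m Q^T) (P *m diag_mx g *m Q^T) = \sum_i g 0 i.
Proof.
move=> hP hQ; rewrite /trinner trmx_mul trmxK.
rewrite !mulmxA -(mulmxA Q P^T P) hP mulmx1 mxtrace_mulC mulmxA hQ mul1mx.
by rewrite mxtrace_diag.
Qed.

End Basic.

Section Eig.
Variable R : realType.

Lemma realC_Im (x : R[i]) : x \is Num.real -> x = real_complex R (complex.Re x).
Proof.
case: x => a b; rewrite realE => /orP [] h.
  by move: h; rewrite lecE /= => /andP [/eqP -> _].
by move: h; rewrite lecE /= => /andP [/eqP <- _].
Qed.

Lemma sym_eig m (A : 'M[R]_m.+1) : A^T = A ->
  exists a, exists2 v : 'cV[R]_m.+1, v != 0 & A *m v = a *: v.
Proof.
move=> hA.
pose f := real_complex R.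
pose AC := map_mx f A.
have herm : AC \is hermsymmx.
  apply: realsym_hermsym.
    apply/is_hermitianmxP; rewrite expr0 scale1r; apply/matrixP => i j; rewrite !mxE /=.
    by rewrite -{1}hA mxE.
  apply/mxOverP => i j; rewrite /AC mxE /f realE !lecR.
  exact: num_real.
have dreal := hermitian_spectral_diag_real herm.
have /orthomx_spectralP hAC := hermitian_normalmx herm.
set P := spectralmx AC in hAC; set d := spectral_diag AC in hAC dreal.
have Pu : P \in unitmx by exact: spectral_unit.
pose a0 := d 0 0.
have a0r : a0 \is Num.real by exact: (mxOverP dreal).
pose a := complex.Re a0.
have ea : a0 = f a by rewrite /f /a -realC_Im.
have hdet : \det (AC - a0%:M) = 0.
  have -> : AC - a0%:M = invmx P *m (diag_mx d - a0%:M) *m P.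
    rewrite mulmxBr mulmxBl -hAC; congr (_ - _).
    by rewrite scalar_mxC -mulmxA mulVmx // mulmx1.
  rewrite !det_mulmx det_inv mulrC mulrA mulrV ?mul1r; last by rewrite -unitmxE.
  have -> : diag_mx d - a0%:M = diag_mx (d - const_mx a0).
    by apply/matrixP => i j; rewrite !mxE; case: (i == j); rewrite ?mulr1n ?mulr0n ?subr0.
  rewrite det_diag (bigD1 0) //= !mxE subrr mul0r //.
have hdetR : \det (A - a%:M) = 0.
  apply: (@complexI R); rewrite -[X in _ = X](rmorph0 f).
  by rewrite -det_map_mx map_mxB map_scalar_mx rmorph0 -hdet ea.
set B := A - a%:M.
have Bs : B^T = B by rewrite /B linearB /= hA tr_scalar_mx.
have nk : kermx B != 0.
  rewrite kermx_eq0 row_free_unit unitmxE hdetR.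
  by rewrite unitfE eqxx.
have [i hi] : exists i, row i (kermx B) != 0.
  case: (boolP [exists i, row i (kermx B) != 0]) => [/existsP //|/existsPn hn].
  exfalso; move/negP: nk; apply; apply/eqP/row_matrixP => i; rewrite row0.
  by apply/eqP; move: (hn i); rewrite negbK.
exists a, (row i (kermx B))^T; first by rewrite trmx_eq0.
have : row i (kermx B) *m B = 0 by rewrite -row_mul mulmx_ker row0.
move/(congr1 trmx); rewrite trmx_mul Bs trmx0 /B mulmxBl mul_scalar_mx.
by move/eqP; rewrite subr_eq0 => /eqP.
Qed.

End Eig.

Section SVD.
Variable R : realType.

Lemma mx11E (M : 'M[R]_1) : M = (M 0 0)%:M.
Proof. exact: mx11_scalar. Qed.

Lemma dotv_mx m (x y : 'cV[R]_m) : x^T *m y = (dotv x y)%:M.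
Proof. exact: mx11_scalar. Qed.

Lemma dotv_eq0 m (x : 'cV[R]_m) : dotv x x = 0 -> x = 0.
Proof.
rewrite dotvE => h.
have h' : \sum_i x i 0 ^+ 2 = 0.
  by rewrite -[RHS]h; apply: eq_bigr => i _; rewrite expr2.
have := sumsq_eq0 h' => H0.
by apply/matrixP => i j; rewrite (ord1 j) H0 mxE.
Qed.

Lemma trmx11 (M : 'M[R]_1) : M^T = M.
Proof. by rewrite [M]mx11E tr_scalar_mx. Qed.

Definition e0 m : 'cV[R]_(1 + m) := col_mx (1%:M : 'M_1) 0.

Lemma e0_unit m : (e0 m)^T *m e0 m = 1%:M.
Proof. by rewrite /e0 tr_col_mx mul_row_col trmx1 mul1mx trmx0 mul0mx addr0. Qed.

Lemma householder m (x : 'cV[R]_(1 + m)) : x^T *m x = 1%:M ->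
  exists H : 'M[R]_(1 + m), H^T *m H = 1%:M /\ H *m e0 m = x.
Proof.
move=> hx.
set e := e0 m.
set t := (x^T *m e) 0 0.
have hxe : x^T *m e = t%:M by exact: mx11E.
have hex : e^T *m x = t%:M by rewrite -[e^T *m x]trmx11 trmx_mul trmxK hxe.
set w := x - e.
have tw : w^T = x^T - e^T by rewrite /w; apply/matrixP => i j; rewrite !mxE.
have hww : w^T *m w = (2 - 2 * t)%:M.
  rewrite tw mulmxBl /w !mulmxBr hx hxe hex e0_unit.
  by apply/matrixP => i j; rewrite !mxE; case: (i == j); rewrite /= ?mulr1n ?mulr0n; ring.
have hwe : w^T *m e = (t - 1)%:M.
  rewrite tw mulmxBl hxe e0_unit.
  by apply/matrixP => i j; rewrite !mxE; case: (i == j); rewrite ?mulr1n ?mulr0n ?subr0.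
have [t1|tn1] := eqVneq t 1.
  have w0 : w = 0.
    apply: dotv_eq0; have := dotv_mx w w; rewrite hww t1 => /matrixP/(_ 0 0).
    rewrite !mxE /= !mulr1n => <-; ring.
  exists 1%:M; rewrite trmx1 !mul1mx; split => //.
  by move/eqP: w0; rewrite /w subr_eq0 => /eqP.
set c := 2 - 2 * t.
have cn0 : c != 0.
  by rewrite /c subr_eq0; apply: contra tn1 => /eqP h; apply/eqP; lra.
set k := 2 / c.
exists (1%:M - k *: (w *m w^T)).
have Hs : (1%:M - k *: (w *m w^T))^T = 1%:M - k *: (w *m w^T).
  by rewrite linearB /= linearZ /= trmx_mul trmxK trmx1.
split.
  rewrite Hs mulmxBl !mulmxBr mul1mx mulmx1 -!scalemxAl -!scalemxAr.
  rewrite !mulmxA -(mulmxA w) hww mul_mx_scalar -scalemxAl !scalerA.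
  have -> : k * (k * c) = k + k.
    rewrite /k; field; exact: cn0.
  by rewrite mul1mx; move: (w *m w^T) => M; apply/matrixP => i j; rewrite !mxE; ring.
rewrite mulmxBl mul1mx -scalemxAl -mulmxA hwe mul_mx_scalar scalerA.
have -> : k * (t - 1) = -1 by rewrite /k /c; field; exact: cn0.
by rewrite scaleN1r opprK /w addrC subrK.
Qed.


Lemma sv_aux m (L : 'M[R]_m) x a : x^T *m x = 1%:M -> L^T *m L *m x = a *: x ->
  L *m x != 0 ->
  exists y : 'cV[R]_m, exists s : R, y^T *m y = 1%:M /\ 0 <= s /\ L *m x = s *: y /\ L^T *m y = s *: x.
Proof.
move=> hx hL hz.
set z := L *m x in hz *.
set q := dotv z z.
have q0 : 0 < q.
  rewrite lt_neqAle dotv_ge0 andbT eq_sym; apply: contra hz => /eqP h.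
  by apply/eqP; apply: dotv_eq0.
set s := Num.sqrt q.
have s0 : 0 < s by rewrite sqrtr_gt0.
have sn0 : s != 0 by rewrite gt_eqF.
have ss : s * s = q by rewrite -expr2 sqr_sqrtr // ltW.
have hq : q = a.
  have : z^T *m z = a%:M.
    by rewrite /z trmx_mul -mulmxA (mulmxA L^T) hL -scalemxAr hx scalemx1.
  by rewrite dotv_mx => /matrixP/(_ 0 0); rewrite !mxE /= !mulr1n.
exists (s^-1 *: z), s; split.
  rewrite linearZ /= [(_ *: _)^T]linearZ /= -scalemxAl scalerA dotv_mx -/q -ss.
  rewrite -[(s * s)%:M]scalemx1 scalerA.
  have -> : s^-1 / s * (s * s) = 1 by field.
  by rewrite scale1r.
split; first exact: ltW.
split; first by rewrite scalerA mulfV // scale1r.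
by rewrite -scalemxAr /z mulmxA hL scalerA -hq -ss mulrA mulVf // mul1r.
Qed.

Lemma unit_eig m (A : 'M[R]_(1 + m)) : A^T = A ->
  exists x : 'cV[R]_(1 + m), exists a : R, x^T *m x = 1%:M /\ A *m x = a *: x.
Proof.
move=> hA; have [a [v vn0 hv]] := sym_eig hA.
set q := dotv v v.
have q0 : 0 < q.
  rewrite lt_neqAle dotv_ge0 andbT eq_sym; apply: contra vn0 => /eqP h.
  by apply/eqP; apply: dotv_eq0.
set s := Num.sqrt q.
have s0 : 0 < s by rewrite sqrtr_gt0.
have sn0 : s != 0 by rewrite gt_eqF.
have ss : s * s = q by rewrite -expr2 sqr_sqrtr // ltW.
exists (s^-1 *: v), a; split.
  rewrite linearZ /= [(_ *: _)^T]linearZ /= -scalemxAl scalerA dotv_mx -/q -ss.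
  rewrite -[(s * s)%:M]scalemx1 scalerA.
  have -> : s^-1 / s * (s * s) = 1 by field.
  by rewrite scale1r.
by rewrite -scalemxAr hv !scalerA mulrC.
Qed.

Lemma sv_pair m (L : 'M[R]_(1 + m)) : exists x : 'cV[R]_(1 + m), exists y : 'cV[R]_(1 + m), exists s : R,
  x^T *m x = 1%:M /\ y^T *m y = 1%:M /\ 0 <= s /\ L *m x = s *: y /\ L^T *m y = s *: x.
Proof.
have s1 : (L^T *m L)^T = L^T *m L by rewrite trmx_mul trmxK.
have [x [a [hx hxa]]] := @unit_eig m (L^T *m L) s1.
have [Lx0|Lxn0] := eqVneq (L *m x) 0; last first.
  have [y [s [hy [hs [h1 h2]]]]] := sv_aux hx hxa Lxn0.
  by exists x, y, s.
have s2 : (L^T^T *m L^T)^T = L^T^T *m L^T by rewrite trmx_mul trmxK.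
have [z [b [hz hzb]]] := @unit_eig m (L^T^T *m L^T) s2.
have [Lz0|Lzn0] := eqVneq (L^T *m z) 0; last first.
  have [y [s [hy [hs [h1 h2]]]]] := sv_aux hz hzb Lzn0.
  by exists y, z, s; rewrite trmxK in h2.
by exists x, z, 0; rewrite !scale0r.
Qed.

Lemma block_orth m (P : 'M[R]_m) : P^T *m P = 1%:M ->
  (block_mx (1%:M : 'M_1) 0 0 P)^T *m block_mx (1%:M : 'M_1) 0 0 P = 1%:M.
Proof.
move=> hP; rewrite tr_block_mx mulmx_block !trmx0 trmx1 hP.
rewrite !mul0mx !mulmx0 !mul1mx !addr0 !add0r.
by rewrite -scalar_mx_block.
Qed.

Lemma orth_mul m (A B : 'M[R]_m) : A^T *m A = 1%:M -> B^T *m B = 1%:M ->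
  (A *m B)^T *m (A *m B) = 1%:M.
Proof.
move=> hA hB; rewrite trmx_mul -mulmxA (mulmxA A^T) hA mul1mx hB //.
Qed.

Theorem svd_exists m (L : 'M[R]_m) : exists P : 'M[R]_m, exists Q : 'M[R]_m,
  exists s : 'rV[R]_m, P^T *m P = 1%:M /\ Q^T *m Q = 1%:M /\
  (forall i, 0 <= s 0 i) /\ L = P *m diag_mx s *m Q^T.
Proof.
elim: m L => [|m IH] L.
  exists 1%:M, 1%:M, 0; rewrite trmx1 mul1mx; do 2!split => //; split.
    by move=> i; rewrite mxE.
  by apply/matrixP => [] [].
have [x [y [s [hx [hy [hs [hLx hLy]]]]]]] := @sv_pair m L.
have [Hx [hHx eHx]] := householder hx.
have [Hy [hHy eHy]] := householder hy.
set M : 'M[R]_(1 + m) := Hy^T *m L *m Hx.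
have hye : Hy^T *m y = e0 m by rewrite -eHy mulmxA hHy mul1mx.
have hxe : Hx^T *m x = e0 m by rewrite -eHx mulmxA hHx mul1mx.
have hM1 : M *m e0 m = s *: e0 m.
  by rewrite /M -mulmxA eHx -mulmxA hLx -scalemxAr hye.
have hM2 : M^T *m e0 m = s *: e0 m.
  by rewrite /M !trmx_mul trmxK -!mulmxA eHy hLy -scalemxAr hxe.
have eM : M = block_mx (s%:M : 'M_1) 0 0 (drsubmx M).
  move: hM1 hM2; rewrite -[M]submxK /e0 tr_block_mx !mul_block_col.
  rewrite !mulmx1 !mulmx0 !addr0 scale_col_mx scaler0 scalemx1.
  case/eq_col_mx => -> ->; case/eq_col_mx => _ h.
  by rewrite -[ursubmx M]trmxK h trmx0 !block_mxKdr.
have [P' [Q' [s' [hP' [hQ' [hs' eL']]]]]] := IH (drsubmx M).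
exists (Hy *m block_mx (1%:M : 'M_1) 0 0 P'), (Hx *m block_mx (1%:M : 'M_1) 0 0 Q'),
  (row_mx (s%:M : 'rV_1) s').
split; first by apply: orth_mul => //; exact: block_orth.
split; first by apply: orth_mul => //; exact: block_orth.
split.
  move=> i; rewrite mxE; case: splitP => j _; last exact: hs'.
  by rewrite (ord1 j) mxE eqxx mulr1n.
have key : block_mx (1%:M : 'M_1) 0 0 P' *m diag_mx (row_mx (s%:M : 'rV[R]_1) s')
    *m (block_mx (1%:M : 'M_1) 0 0 Q')^T = M.
  rewrite (diag_mx_row (s%:M : 'rV[R]_1) s') tr_block_mx !trmx0 trmx1.
  have -> : diag_mx (s%:M : 'rV[R]_1) = s%:M.
    by apply/matrixP => i j; rewrite (ord1 i) (ord1 j) !mxE.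
  rewrite !mulmx_block !mul0mx !mulmx0 !mul1mx !mulmx1 !addr0 !add0r.
  by rewrite -eL' mul0mx -eM.
have hHy' : Hy *m Hy^T = 1%:M by apply: mulmx1C.
have hHx' : Hx *m Hx^T = 1%:M by apply: mulmx1C.
rewrite trmx_mul !mulmxA -(mulmxA Hy) -(mulmxA Hy) key /M.
by rewrite !mulmxA hHy' mul1mx -mulmxA hHx' mulmx1.
Qed.

End SVD.

Section Nuc.
Local Open Scope classical_set_scope.
Variable R : realType.
Variable n : nat.
Implicit Types A B L X Y Z : 'M[R]_n.

Lemma orth_contr (P Q : 'M[R]_n) : P^T *m P = 1%:M -> Q^T *m Q = 1%:M ->
  forall x, vnorm ((P *m Q^T) *m x) <= 1 * vnorm x.
Proof.
move=> hP hQ x; rewrite mul1r -mulmxA vnorm_iso //.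
by rewrite vnorm_iso // trmxK; apply: mulmx1C.
Qed.

Lemma nucnormE L (P Q : 'M[R]_n) (s : 'rV[R]_n) :
  P^T *m P = 1%:M -> Q^T *m Q = 1%:M -> (forall i, 0 <= s 0 i) ->
  L = P *m diag_mx s *m Q^T -> nucnorm L = \sum_i s 0 i.
Proof.
move=> hP hQ hs eL.
have ub : forall s', singular_values L s' -> \sum_i s' 0 i <= \sum_i s 0 i.
  move=> s' [P' [Q' [hP' [hQ' [hs' eL']]]]].
  rewrite -(TRsum s' hP' hQ') -eL' eL -[X in _ <= X]mul1r.
  by apply: DB => //; apply: orth_contr.
have lb : forall s', singular_values L s' -> \sum_i s 0 i <= \sum_i s' 0 i.
  move=> s' [P' [Q' [hP' [hQ' [hs' eL']]]]].
  rewrite -(TRsum s hP hQ) -eL eL' -[X in _ <= X]mul1r.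
  by apply: DB => //; apply: orth_contr.
have sv : singular_values L s by exists P, Q.
rewrite /nucnorm; apply/le_anti/andP; split.
  apply: ge_sup; first by exists (\sum_i s 0 i), s.
  by move=> _ [s' hs' <-]; apply: ub.
have hub : has_ubound [set \sum_i s0 0 i | s0 in [set s0 | singular_values L s0]].
  by exists (\sum_i s 0 i) => _ [s' hs' <-]; apply: ub.
by apply: (ub_le_sup hub); exists s.
Qed.

Lemma nuc_lb L Z : (forall x, vnorm (Z *m x) <= 1 * vnorm x) -> trinner Z L <= nucnorm L.
Proof.
move=> hZ; have [P [Q [s [hP [hQ [hs eL]]]]]] := svd_exists L.
rewrite (nucnormE hP hQ hs eL) eL -[X in _ <= X]mul1r.
by apply: DB.
Qed.

Lemma nuc_ub r (U V : 'M[R]_(n, r)) (sigma : 'rV[R]_r) :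
  U^T *m U = 1%:M -> V^T *m V = 1%:M -> (forall i, 0 <= sigma 0 i) ->
  nucnorm (U *m diag_mx sigma *m V^T) <= trinner (U *m V^T) (U *m diag_mx sigma *m V^T).
Proof.
move=> hU hV hs.
have [P [Q [s [hP [hQ [hs' eL]]]]]] := svd_exists (U *m diag_mx sigma *m V^T).
rewrite (nucnormE hP hQ hs' eL) TRsum // -(TRsum s hP hQ) -eL -[X in _ <= X]mul1r.
by apply: DB => //; apply: orth_contr.
Qed.

Lemma vnorm_mul_le A (x : 'cV[R]_n) : vnorm (A *m x) <= frob A * vnorm x.
Proof.
have h0 : 0 <= \sum_i \sum_j A i j ^+ 2 by apply: sumr_ge0 => i _; exact: sumsq_ge0.
rewrite /vnorm /frob -sqrtrM //.
rewrite ler_sqrt; last by rewrite mulr_ge0 // sumsq_ge0.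
rewrite mulr_suml; apply: ler_sum => i _.
rewrite mxE; exact: (CS2 (fun j => A i j) (fun j => x j 0)).
Qed.

Lemma specnorm_le W c : specnorm W <= c ->
  forall x : 'cV[R]_n, vnorm (W *m x) <= c * vnorm x.
Proof.
move=> hW x.
set E := [set vnorm (W *m y) | y in [set y : 'cV[R]_n | vnorm y <= 1]].
have hub : has_ubound E.
  exists (frob W) => _ [y hy <-].
  apply: le_trans (vnorm_mul_le _ _) _.
  by rewrite -[X in _ <= X]mulr1 ler_wpM2l // frob_ge0.
have [x0|xn0] := eqVneq (vnorm x) 0.
  have -> : x = 0.
    apply: dotv_eq0; move: x0; rewrite vnormE => /eqP; rewrite sqrtr_eq0 => h.
    by apply: le_anti; rewrite h dotv_ge0.
  by rewrite mulmx0 !vnormE !dotvE !big1 ?sqrtr0 ?mulr0 // => i _; rewrite mxE mul0r.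
have xp : 0 < vnorm x by rewrite lt_neqAle eq_sym xn0 vnorm_ge0.
set y := (vnorm x)^-1 *: x.
have hy : vnorm y = 1 by rewrite /y vnormZ ger0_norm ?invr_ge0 ?vnorm_ge0 // mulVf.
have : vnorm (W *m y) <= c.
  apply: le_trans hW; apply: (ub_le_sup hub); exists y => //=.
  by rewrite /= hy.
rewrite /y -scalemxAr vnormZ ger0_norm ?invr_ge0 ?vnorm_ge0 //.
by rewrite ler_pdivrMl // mulrC.
Qed.

End Nuc.

Section Proj.
Local Open Scope classical_set_scope.
Variable R : realType.

Definition cP m k (U : 'M[R]_(m, k)) : 'M[R]_m := 1%:M - U *m U^T.

Lemma cP_sym m k (U : 'M[R]_(m, k)) : (cP U)^T = cP U.
Proof. by rewrite /cP linearB /= trmx1 trmx_mul trmxK. Qed.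

Lemma cP_U m k (U : 'M[R]_(m, k)) : U^T *m U = 1%:M -> cP U *m U = 0.
Proof. by move=> hU; rewrite /cP mulmxBl mul1mx -mulmxA hU mulmx1 subrr. Qed.

Lemma UT_cP m k (U : 'M[R]_(m, k)) : U^T *m U = 1%:M -> U^T *m cP U = 0.
Proof. by move=> hU; rewrite /cP mulmxBr mulmx1 mulmxA hU mul1mx subrr. Qed.

Lemma dotvDl m (a b c : 'cV[R]_m) : dotv (a + b) c = dotv a c + dotv b c.
Proof. by rewrite !dotvE -big_split /=; apply: eq_bigr => i _; rewrite mxE mulrDl. Qed.

Lemma dotvDr m (a b c : 'cV[R]_m) : dotv c (a + b) = dotv c a + dotv c b.
Proof. by rewrite dotvC dotvDl !(dotvC c). Qed.

Lemma proj_split m k (U : 'M[R]_(m, k)) (z : 'cV[R]_m) : U^T *m U = 1%:M ->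
  dotv z z = dotv (U^T *m z) (U^T *m z) + dotv (cP U *m z) (cP U *m z).
Proof.
move=> hU.
have ez : z = U *m (U^T *m z) + cP U *m z.
  by rewrite /cP mulmxBl mul1mx mulmxA addrC subrK.
have cross : dotv (U *m (U^T *m z)) (cP U *m z) = 0.
  by rewrite /dotv trmx_mul -mulmxA (mulmxA U^T) UT_cP // mul0mx mulmx0 mxE.
rewrite {1 2}ez dotvDl !dotvDr cross dotvC cross addr0 add0r.
by rewrite dotv_mul hU mul1mx.
Qed.

Lemma dot_cP_le m k (U : 'M[R]_(m, k)) (z : 'cV[R]_m) : U^T *m U = 1%:M ->
  dotv (cP U *m z) (cP U *m z) <= dotv z z.
Proof. by move=> hU; rewrite (proj_split z hU) lerDr dotv_ge0. Qed.

Variable n r : nat.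
Variables U V : 'M[R]_(n, r).
Hypothesis hU : U^T *m U = 1%:M.
Hypothesis hV : V^T *m V = 1%:M.

Definition ptX (X : 'M[R]_n) := X - cP U *m X *m cP V.

Lemma ptX_inT X : inT U V (ptX X).
Proof.
exists (X^T *m U), (cP U *m X *m V).
rewrite trmx_mul trmxK /ptX.
have -> : cP U *m X *m cP V = cP U *m X - cP U *m X *m V *m V^T.
  by rewrite /cP [in LHS]mulmxBr mulmx1 !mulmxA.
have e1 : X - cP U *m X = U *m (U^T *m X).
  by rewrite /cP mulmxBl mul1mx opprB addrC subrK mulmxA.
by rewrite opprD opprK addrA e1 !mulmxA.
Qed.

Lemma trinner_sand M X : trinner (cP U *m M *m cP V) X = trinner M (cP U *m X *m cP V).
Proof.
rewrite /trinner !trmx_mul !cP_sym !mulmxA.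
by rewrite [RHS]mxtrace_mulC !mulmxA.
Qed.

Lemma orthT Z X : inT U V Z -> trinner Z (cP U *m X *m cP V) = 0.
Proof.
move=> [A [B ->]]; rewrite trinnerDl /trinner !trmx_mul !trmxK.
rewrite !mulmxA -(mulmxA A) UT_cP // mulmx0 !mul0mx mxtrace0 add0r.
by rewrite mxtrace_mulC !mulmxA cP_U // !mul0mx mxtrace0.
Qed.

Lemma inTB Y1 Y2 : inT U V Y1 -> inT U V Y2 -> inT U V (Y1 - Y2).
Proof.
move=> [A1 [B1 ->]] [A2 [B2 ->]]; exists (A1 - A2), (B1 - B2).
rewrite linearB /= mulmxBr mulmxBl; rewrite opprD !addrA; congr (_ + _).
by rewrite addrAC.
Qed.

Lemma PT_eq X : PT U V X = ptX X.
Proof.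
rewrite /PT; apply: xget_unique.
  split; first exact: ptX_inT.
  by move=> Z hZ; rewrite /ptX opprB addrC subrK; apply: orthT.
move=> Y [hY hYo].
have eX : X - ptX X = cP U *m X *m cP V by rewrite /ptX opprB addrC subrK.
have hD := inTB hY (ptX_inT X).
have e1 : trinner (Y - ptX X) (X - Y) = 0 := hYo _ hD.
have e2 : trinner (Y - ptX X) (X - ptX X) = 0 by rewrite eX; apply: orthT.
set D := Y - ptX X in e1 e2 *.
have eD : D = (X - ptX X) - (X - Y).
  by apply/matrixP => i j; rewrite !mxE; ring.
have e3 : trinner D D = 0 by rewrite {2}eD trinnerBr e2 e1 subrr.
have : D = 0.
  apply: frob_eq0; apply/eqP; rewrite -sqrf_eq0 frob_sq e3 //.
by move/eqP; rewrite subr_eq0 => /eqP.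
Qed.



Lemma cP_idem m k (W : 'M[R]_(m, k)) : W^T *m W = 1%:M -> cP W *m cP W = cP W.
Proof.
move=> hW; rewrite {1}/cP mulmxBl mul1mx -mulmxA UT_cP // mulmx0 subr0 //.
Qed.

Lemma vnorm_le_dot m (a b : 'cV[R]_m) : (vnorm a <= vnorm b) = (dotv a a <= dotv b b).
Proof. by rewrite !vnormE ler_sqrt // dotv_ge0. Qed.

Lemma Zcontr (M : 'M[R]_n) : (forall y, vnorm (M *m y) <= vnorm y) ->
  forall x, vnorm ((U *m V^T + cP U *m M *m cP V) *m x) <= 1 * vnorm x.
Proof.
move=> hM x; rewrite mul1r vnorm_le_dot.
set y := V^T *m x; set z := M *m (cP V *m x).
have ew : (U *m V^T + cP U *m M *m cP V) *m x = U *m y + cP U *m z.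
  by rewrite mulmxDl /y /z !mulmxA.
rewrite ew (proj_split _ hU) (proj_split x hV) -/y.
have -> : U^T *m (U *m y + cP U *m z) = y.
  by rewrite mulmxDr mulmxA hU mul1mx mulmxA UT_cP // mul0mx addr0.
have -> : cP U *m (U *m y + cP U *m z) = cP U *m z.
  by rewrite mulmxDr mulmxA cP_U // mul0mx add0r mulmxA cP_idem.
rewrite lerD2l; apply: le_trans (dot_cP_le _ hU) _.
by rewrite -vnorm_le_dot; apply: hM.
Qed.

Lemma ptX_frob (X : 'M[R]_n) : frob (ptX X) <= frob X.
Proof.
have o : trinner (ptX X) (cP U *m X *m cP V) = 0 by apply: orthT; apply: ptX_inT.
have eX : X = ptX X + cP U *m X *m cP V by rewrite /ptX subrK.
set p := ptX X in o eX *; set c := cP U *m X *m cP V in o eX *.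
rewrite -(ler_pXn2r (n:=2)) ?nnegrE ?frob_ge0 //.
rewrite !frob_sq.
have -> : trinner X X = trinner (p + c) (p + c) by rewrite -eX.
clearbody p c.
rewrite trinnerDl !trinnerDr o (trinnerC c p) o addr0 add0r lerDl.
exact: trinner_ge0.
Qed.

Lemma ptXZ a (X : 'M[R]_n) : ptX (a *: X) = a *: ptX X.
Proof. by rewrite /ptX scalerBr -scalemxAr -scalemxAl. Qed.



End Proj.

Section PO.
Local Open Scope classical_set_scope.
Variable R : realType.
Variable n : nat.
Implicit Types A B X Y : 'M[R]_n.
Variable Om : {set 'I_n * 'I_n}.

Lemma POZ a X : PO Om (a *: X) = a *: PO Om X.
Proof. by apply/matrixP => i j; rewrite !mxE; case: ifP; rewrite ?mulr0. Qed.

Lemma POD X Y : PO Om (X + Y) = PO Om X + PO Om Y.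
Proof. by apply/matrixP => i j; rewrite !mxE; case: ifP; rewrite ?addr0. Qed.

Lemma PO0 : PO Om 0 = 0 :> 'M[R]_n.
Proof. by apply/matrixP => i j; rewrite !mxE; case: ifP. Qed.

Lemma PO_frob X : frob (PO Om X) <= frob X.
Proof.
rewrite /frob ler_sqrt; last by apply: sumr_ge0 => i _; exact: sumsq_ge0.
apply: ler_sum => i _; apply: ler_sum => j _; rewrite mxE.
by case: ifP => _ //; rewrite expr0n /= sqr_ge0.
Qed.

Lemma trinner_PO A B : trinner (PO Om A) B = trinner (PO Om A) (PO Om B).
Proof.
rewrite !trinnerE; apply: eq_bigr => i _; apply: eq_bigr => j _.
by rewrite !mxE; case: ifP; rewrite ?mul0r.
Qed.

Lemma frobE A : frob A = Num.sqrt (trinner A A).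
Proof. by rewrite -frob_sq sqrtr_sqr ger0_norm // frob_ge0. Qed.

Lemma frobZ a A : frob (a *: A) = `|a| * frob A.
Proof.
by rewrite !frobE trinnerZl trinnerZr mulrA -expr2 sqrtrM ?sqr_ge0 // sqrtr_sqr.
Qed.

Lemma frob0 : frob (0 : 'M[R]_n) = 0.
Proof. by rewrite frobE /trinner mulmx0 mxtrace0 sqrtr0. Qed.

End PO.

Section Opn.
Local Open Scope classical_set_scope.
Variable R : realType.
Variables n r : nat.
Variables U V : 'M[R]_(n, r).
Hypothesis hU : U^T *m U = 1%:M.
Hypothesis hV : V^T *m V = 1%:M.
Variable Om : {set 'I_n * 'I_n}.

Lemma opnorm_le c : opnorm (fun X => PO Om (PT U V X)) <= c ->
  forall X, frob (PO Om (ptX U V X)) <= c * frob X.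
Proof.
move=> hc X.
set E := [set frob ((fun X => PO Om (PT U V X)) Y) | Y in [set Y : 'M[R]_n | frob Y <= 1]].
have hub : has_ubound E.
  exists 1 => _ [Y hY <-] /=; rewrite PT_eq //.
  by apply: le_trans (PO_frob _ _) _; apply: le_trans (ptX_frob hU hV _) _.
have [x0|xn0] := eqVneq (frob X) 0.
  by rewrite (frob_eq0 x0) /ptX mulmx0 mul0mx subr0 PO0 frob0 mulr0.
have xp : 0 < frob X by rewrite lt_neqAle eq_sym xn0 frob_ge0.
set Y := (frob X)^-1 *: X.
have hy : frob Y = 1 by rewrite /Y frobZ ger0_norm ?invr_ge0 ?frob_ge0 // mulVf.
have : frob (PO Om (ptX U V Y)) <= c.
  apply: le_trans hc; rewrite -PT_eq //; apply: (ub_le_sup hub); exists Y => //=.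
  by rewrite /= hy.
rewrite /Y ptXZ POZ frobZ ger0_norm ?invr_ge0 ?frob_ge0 //.
by rewrite ler_pdivrMl // mulrC.
Qed.

End Opn.

Section L1.
Local Open Scope classical_set_scope.
Variable R : realType.
Variable n : nat.

Lemma l1_key (S0 H F : 'M[R]_n) : PO (supp S0) F = 0 ->
  (forall i j, `|F i j| <= 1/2) ->
  l1norm S0 - trinner (sgnm S0) H + 1/2 * l1norm (H - PO (supp S0) H)
    <= l1norm (S0 - H) + trinner F H.
Proof.
move=> hF hFb.
rewrite /l1norm !trinnerE mulr_sumr -sumrB -!big_split /=.
apply: ler_sum => i _; rewrite mulr_sumr -sumrB -!big_split /=.
apply: ler_sum => j _; rewrite !mxE.
have hFij := congr1 (fun M : 'M[R]_n => M i j) hF; rewrite /= !mxE in hFij.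
have := hFb i j.
rewrite /supp !inE /= in hFij *; case: (eqVneq (S0 i j) 0) => [s0|sn0] /=.
  rewrite s0 sgr0 normr0 mul0r subr0 add0r sub0r normrN subr0 => hf.
  have h1 : - `|F i j * H i j| <= F i j * H i j.
    by rewrite lerNl -[X in _ <= X]normrN ler_norm.
  rewrite normrM in h1.
  have h2 : `|F i j| * `|H i j| <= 1/2 * `|H i j| by rewrite ler_wpM2r.
  lra.
rewrite sn0 /= in hFij.
rewrite subrr normr0 mulr0 addr0 hFij mul0r addr0 => _.
have [sp|sn] := ltP 0 (S0 i j).
  rewrite gtr0_sg // mul1r gtr0_norm //; exact: ler_norm.
have sn' : S0 i j < 0 by rewrite lt_neqAle sn sn0.
rewrite ltr0_sg // ltr0_norm // mulN1r opprK.
by rewrite -normrN opprB; apply: le_trans (ler_norm _); rewrite addrC.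
Qed.

Lemma infnorm_le (F : 'M[R]_n) i j : `|F i j| <= infnorm F.
Proof.
rewrite /infnorm.
apply: le_trans (le_bigmax _ _ i).
exact: (le_bigmax _ (fun j => `|F i j|) j).
Qed.

End L1.

Theorem lemma2p4 (R : realType) (n r : nat)
  (L0 S0 : 'M[R]_n) (U V : 'M[R]_(n, r)) (sigma : 'rV[R]_r) (lambda : R) :
  U^T *m U = 1%:M -> V^T *m V = 1%:M ->
  (forall i, 0 < sigma 0 i) ->
  L0 = U *m diag_mx sigma *m V^T ->
  0 < lambda -> lambda < 1 ->
  opnorm (fun X => PO (supp S0) (PT U V X)) <= 1 / 2 ->
  (exists W F D : 'M[R]_n,
      U *m V^T + W = lambda *: (sgnm S0 + F + PO (supp S0) D) /\
      PT U V W = 0 /\ specnorm W <= 1 / 2 /\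
      PO (supp S0) F = 0 /\ infnorm F <= 1 / 2 /\
      frob (PO (supp S0) D) <= 1 / 4) ->
  (forall L S : 'M[R]_n, L + S = L0 + S0 ->
      nucnorm L0 + lambda * l1norm S0 <= nucnorm L + lambda * l1norm S) /\
  (forall L S : 'M[R]_n, L + S = L0 + S0 ->
      nucnorm L + lambda * l1norm S = nucnorm L0 + lambda * l1norm S0 ->
      L = L0 /\ S = S0).
Proof.
move=> hU hV hsig eL0 hl0 hl1 hop [W [F [D [eqW [hW [hWs [hF [hFi hD]]]]]]]].
set Om := supp S0.
have key : forall L S : 'M[R]_n, L + S = L0 + S0 ->
    nucnorm L0 + lambda * l1norm S0 <= nucnorm L + lambda * l1norm S /\
    (nucnorm L + lambda * l1norm S = nucnorm L0 + lambda * l1norm S0 -> L = L0).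
  move=> L S eLS.
  set H := L - L0.
  have eL : L = L0 + H by rewrite /H addrC subrK.
  have eS : S = S0 - H.
    rewrite /H; apply/matrixP => i j; have := congr1 (fun M : 'M[R]_n => M i j) eLS.
    rewrite /= !mxE => h; lra.
  clearbody H.
  set G := cP U *m H *m cP V.
  have eGd : G = cP U *m H *m cP V by [].
  clearbody G.
  have [P [Q [g [hP [hQ [hg eG]]]]]] := svd_exists G.
  set N := \sum_i g 0 i.
  have N0 : 0 <= N by apply: sumr_ge0 => i _; exact: hg.
  set W0 := cP U *m (P *m Q^T) *m cP V.
  have hM : forall y, vnorm ((P *m Q^T) *m y) <= vnorm y.
    by move=> y; have := orth_contr hP hQ y; rewrite mul1r.
  have hZ := Zcontr hU hV hM.
  have nucL := nuc_lb L hZ.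
  have nucL0 : nucnorm L0 <= trinner (U *m V^T) L0.
    rewrite eL0; apply: nuc_ub => // i; exact: ltW.
  have tW0L0 : trinner W0 L0 = 0.
    rewrite /W0 trinner_sand eL0 !mulmxA cP_U // !mul0mx.
    by rewrite /trinner mulmx0 mxtrace0.
  have tW0H : trinner W0 H = N.
    by rewrite /W0 trinner_sand -eGd eG TRsum.
  have tZL : trinner (U *m V^T + W0) L =
      trinner (U *m V^T) L0 + trinner (U *m V^T) H + N.
    by rewrite eL trinnerDl !trinnerDr tW0L0 tW0H add0r.
  have hFb : forall i j, `|F i j| <= 1/2.
    by move=> i j; apply: le_trans (infnorm_le _ _ _) hFi.
  have hl1k := l1_key H hF hFb.
  rewrite -/Om in hl1k; rewrite -eS in hl1k.
  set a := l1norm (H - PO Om H) in hl1k.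
  have a0 : 0 <= a by rewrite /a /l1norm; apply: sumr_ge0 => i _; apply: sumr_ge0.
  have eW : W = cP U *m W *m cP V.
    have := hW; rewrite PT_eq // /ptX => /eqP; rewrite subr_eq0 => /eqP //.
  have tWH : trinner W H <= 1/2 * N.
    rewrite eW trinner_sand -eGd eG; apply: (DB hP hQ hg _ (specnorm_le hWs)).
    lra.
  set d := frob (PO Om H).
  set e := frob (PO Om D).
  have d0 : 0 <= d by exact: frob_ge0.
  have tDH : - (e * d) <= trinner (PO Om D) H.
    rewrite trinner_PO lerNl; apply: le_trans (CSFabs _ _).
    by rewrite -normrN ler_norm.
  have eUV : trinner (U *m V^T) H = lambda * trinner (sgnm S0) H + lambda * trinner F H
      + lambda * trinner (PO Om D) H - trinner W H.
    have -> : U *m V^T = lambda *: (sgnm S0 + F + PO Om D) - W by rewrite -eqW addrK.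
    by rewrite trinnerBl trinnerZl !trinnerDl; ring.
  have fG : frob G <= N.
    have h1 : frob G ^+ 2 <= frob G * N.
      rewrite frob_sq {2}eG; apply: DB => //; first exact: frob_ge0.
      by move=> x; exact: vnorm_mul_le.
    have := frob_ge0 G; nra.
  have hd : d <= a + 2 * N.
    have eH : H = ptX U V H + G by rewrite /ptX eGd subrK.
    have h1 : d <= 1/2 * frob H + frob G.
      rewrite /d {1}eH POD; apply: le_trans (frob_tri _ _) _.
      apply: lerD; first exact: (opnorm_le hU hV hop).
      exact: PO_frob.
    have h2 : frob H <= d + a.
      have -> : H = PO Om H + (H - PO Om H) by rewrite addrC subrK.
      apply: le_trans (frob_tri _ _) _; rewrite /d /a.
      by rewrite lerD2l; exact: frob_le_l1.
    lra.
  have ed : lambda * (e * d) <= lambda * (1/4 * (a + 2 * N)).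
    apply: ler_wpM2l; first lra.
    apply: (@le_trans _ _ (1/4 * d)); first exact: ler_wpM2r.
    apply: ler_wpM2l; first lra.
    exact: hd.
  have main : nucnorm L0 + lambda * l1norm S0 + (lambda * a / 4 + (1 - lambda) * N / 2)
      <= nucnorm L + lambda * l1norm S.
    have hl1' : lambda * (l1norm S0 - trinner (sgnm S0) H + 1/2 * a)
        <= lambda * (l1norm S + trinner F H).
      by apply: ler_wpM2l; [lra | exact: hl1k].
    have hD' : lambda * (- (e * d)) <= lambda * trinner (PO Om D) H.
      by apply: ler_wpM2l; [lra | exact: tDH].
    move: nucL; rewrite tZL eUV => nucL.
    nra.
  have q0 : 0 <= lambda * a / 4 + (1 - lambda) * N / 2.
    apply: addr_ge0; apply: divr_ge0 => //; apply: mulr_ge0 => //; lra.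
  split; first lra.
  move=> heq.
  have hq : lambda * a / 4 + (1 - lambda) * N / 2 = 0 by lra.
  have t1 : 0 <= lambda * a by apply: mulr_ge0 => //; lra.
  have t2 : 0 <= (1 - lambda) * N by apply: mulr_ge0 => //; lra.
  have la : lambda * a = 0 by lra.
  have lN : (1 - lambda) * N = 0 by lra.
  have az : a = 0.
    by move/eqP: la; rewrite mulf_eq0 gt_eqF //= => /eqP.
  have Nz : N = 0.
    by move/eqP: lN; rewrite mulf_eq0 subr_eq0 (gt_eqF hl1) /= => /eqP.
  have dz : d = 0 by lra.
  have h1 := frob_eq0 dz.
  have h2 := l1_eq0 az.
  have : H = 0 by rewrite -(subrK (PO Om H) H) h2 h1 addr0.
  by rewrite eL => ->; rewrite addr0.
split.
  by move=> L S eLS; case: (key L S eLS).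
move=> L S eLS heq; have [_ h] := key L S eLS.
have eL := h heq; split => //.
by move: eLS; rewrite eL => /addrI.
Qed.
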